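(* Let $\lambda_1,\dots,\lambda_J>0$, $\lambda_{\max}=\max_j\lambda_j$, $\Gamma\ge0$ with $\min_j\lambda_j\Gamma\ge e^{2e}$, and let $(U^j_k)_{k\ge1}$ be nonnegative reals satisfying $\big|\sum_{i=1}^kU^j_i-\lambda_j^{-1}k\big|\le\Gamma\,\phi(k)$ for all $k\ge1$ and all $j$. Let $A_j(t)=\max\{k\ge0:\sum_{i=1}^kU^j_i\le t\}$. Then for every $t$ with $$t\ge\max_j\big(\lambda_j^{-1}e^e,\ \lambda_j^{-1}+3\lambda_j^{-1}\lambda_{\max}^2\Gamma^2\big),$$ we have $A_j(t)\le t\lambda_j+3\lambda_j^2\Gamma^2\phi(t\lambda_j)$ for every $j$.
   Context: $\phi(x)=\sqrt{x\ln\ln x}$ for $x\ge e^e$ and $\phi(x)=1$ for $x<e^e$. *)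

(* Defs.v *)
From Stdlib Require Import Reals Lra.
Open Scope R_scope.

Definition phi (x : R) : R :=
  if Rle_dec (exp (exp 1)) x then sqrt (x * ln (ln x)) else 1.

Fixpoint psum (u : nat -> R) (k : nat) : R :=
  match k with
  | O => 0
  | S k' => psum u k' + u k
  end.

(* lam_max lam J = max_{0 <= j < J} lam j  (J >= 1; value 0 for J = 0). *)
Fixpoint lam_max (lam : nat -> R) (J : nat) : R :=
  match J with
  | O => 0
  | S J' => Rmax (lam_max lam J') (lam J')
  end.

(* A u t = max {k >= 0 : psum u k <= t}; we express "A u t <= b" as
   "every k with psum u k <= t satisfies k <= b". *)
Definition A_le (u : nat -> R) (t b : R) : Prop :=
  forall k : nat, psum u k <= t -> INR k <= b.

(* Main.v *)
Require Import Defs.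
From Stdlib Require Import Reals Lra Psatz Lia.
Open Scope R_scope.

Lemma ln_le_sub1 y : 0 < y -> ln y <= y - 1.
Proof. intro H. pose proof (exp_ineq1_le (ln y)). rewrite exp_ln in H0; lra. Qed.

Lemma ln_le' a b : 0 < a -> a <= b -> ln a <= ln b.
Proof. intros Ha Hab. destruct (Rle_lt_or_eq_dec _ _ Hab) as [H|H].
 - left; apply ln_increasing; auto.
 - subst; lra. Qed.

Lemma e_ge2 : 2 <= exp 1.
Proof. pose proof (exp_ineq1_le 1); lra. Qed.

Lemma exp_double z : exp (2*z) = exp z * exp z.
Proof. replace (2*z) with (z+z) by ring. apply exp_plus. Qed.

Lemma exp_2e : 35 <= exp (2 * exp 1).
Proof.
  pose proof e_ge2 as He.
  set (z := exp 1 / 8).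
  assert (Ha : 5/4 <= exp z) by (pose proof (exp_ineq1_le z); unfold z in *; lra).
  assert (E : 2 * exp 1 = 2*(2*(2*(2*z)))) by (unfold z; field).
  rewrite E, !exp_double.
  assert (0 < exp z) by apply exp_pos.
  assert (H2 : 25/16 <= exp z * exp z) by nra.
  assert (H4 : 2.44 <= exp z * exp z * (exp z * exp z)) by nra.
  set (w := exp z * exp z * (exp z * exp z)) in *.
  assert (H8 : 5.95 <= w*w) by nra.
  nra.
Qed.

Lemma phi_big x : exp (exp 1) <= x -> phi x = sqrt (x * ln (ln x)).
Proof. intro H. unfold phi. destruct (Rle_dec (exp (exp 1)) x); [reflexivity|contradiction]. Qed.

Lemma phi_pos x : 0 <= phi x.
Proof. unfold phi. destruct (Rle_dec _ _). apply sqrt_pos. lra. Qed.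

Lemma lnx_ge x : exp (exp 1) <= x -> exp 1 <= ln x.
Proof. intro H. rewrite <- (ln_exp (exp 1)) at 1. apply ln_le'; auto. apply exp_pos. Qed.

Lemma lnln_ge1 x : exp (exp 1) <= x -> 1 <= ln (ln x).
Proof. intro H. pose proof (lnx_ge x H). rewrite <- (ln_exp 1) at 1. apply ln_le'; auto. apply exp_pos. Qed.

Lemma ln_le_q q : 0 < q -> ln q <= q / 2.
Proof. intro Hq. pose proof e_ge2. pose proof (exp_pos 1).
  assert (0 < q / exp 1) by (apply Rdiv_lt_0_compat; lra).
  pose proof (ln_le_sub1 _ H1).
  unfold Rdiv in H2. rewrite ln_mult, ln_Rinv, ln_exp in H2; try lra.
  2: apply Rinv_0_lt_compat; lra.
  assert (q * / exp 1 <= q / 2).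
  { unfold Rdiv. apply Rmult_le_compat_l; [lra|]. apply Rinv_le_contravar; lra. }
  lra.
Qed.

Lemma core x c k : exp (exp 1) <= x -> 3*c^2 <= x -> 35 <= c -> 0 <= k ->
  k <= x + c * phi k -> k <= x + 3*c^2*phi x.
Proof.
  intros Hx Hxc Hc Hk Hkk.
  destruct (Rle_or_lt k (x + 3*c^2*phi x)) as [H|H]; auto. exfalso.
  pose proof (exp_pos (exp 1)) as Hee.
  pose proof e_ge2 as He.
  assert (Hee2 : exp 1 * exp 1 <= exp (exp 1)).
  { replace (exp 1 * exp 1) with (exp (2*1)) by (rewrite exp_double; ring).
    destruct (Rle_lt_or_eq_dec (2*1) (exp 1)) as [h|h]; [lra| |].
    - left; apply exp_increasing; auto.
    - rewrite h; lra. }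
  assert (Hx2 : 4 <= x) by nra.
  rewrite phi_big in H by auto.
  pose proof (lnln_ge1 x Hx) as HM. set (M := ln (ln x)) in *.
  pose proof (lnx_ge x Hx) as HLx.
  assert (HxM : 0 <= x * M) by nra.
  pose proof (sqrt_sqrt _ HxM) as HP. set (P := sqrt (x*M)) in *.
  pose proof (sqrt_pos (x*M)) as HP0. change (sqrt (x*M)) with P in HP0.
  assert (Hs0 : 0 <= x) by lra.
  pose proof (sqrt_sqrt _ Hs0) as Hs. set (s := sqrt x) in *.
  pose proof (sqrt_pos x) as Hs1. change (sqrt x) with s in Hs1.
  assert (HPs : s <= P) by (apply sqrt_le_1_alt; nra).
  set (d := k - x).
  assert (Hd : 3*c^2*P < d) by (unfold d; lra).
  assert (Hke : exp (exp 1) <= k) by (assert (0 <= 3*c^2*P) by nra; lra).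
  rewrite phi_big in Hkk by auto.
  pose proof (lnln_ge1 k Hke) as HL. set (L := ln (ln k)) in *.
  pose proof (lnx_ge k Hke) as HLk.
  assert (HkL : 0 <= k * L) by nra.
  pose proof (sqrt_sqrt _ HkL) as HQ. set (Q := sqrt (k*L)) in *.
  pose proof (sqrt_pos (k*L)) as HQ0. change (sqrt (k*L)) with Q in HQ0.
  assert (Hdpos : 0 < d) by nra.
  assert (HdQ : d <= c*Q) by (unfold d; lra).
  assert (Hd2 : d*d <= c^2 * (k*L)).
  { rewrite <- HQ. assert (d*d <= (c*Q)*(c*Q)) by (apply Rmult_le_compat; lra). nra. }
  destruct (Rle_or_lt d x) as [Hdx|Hdx].
  - assert (HL2 : L <= 2*M).
    { unfold L, M.
      assert (ln k <= 2 * ln x).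
      { replace (2 * ln x) with (ln (x*x)) by (rewrite ln_mult; lra).
        apply ln_le'; unfold d in *; nra. }
      replace (2 * ln (ln x)) with (ln (ln x * ln x)) by (rewrite ln_mult; lra).
      apply ln_le'; [lra|]. nra. }
    assert (Hk2 : k <= 2*x) by (unfold d in *; lra).
    assert (k*L <= (2*x)*(2*M)) by (apply Rmult_le_compat; lra).
    assert (d*d > 9*c^4*(x*M)).
    { rewrite <- HP. assert (0 <= 3*c^2*P) by nra.
      assert ((3*c^2*P)*(3*c^2*P) < d*d) by (apply Rmult_le_0_lt_compat; lra). nra. }
    assert (c^2 * (k*L) <= c^2 * ((2*x)*(2*M))) by (apply Rmult_le_compat_l; nra).
    assert (c^4 * (x*M) >= c^2 * (x*M)).
    { assert (1 <= c^2) by nra. replace (c^4) with (c^2*c^2) by ring.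
      apply Rle_ge. rewrite Rmult_assoc. rewrite <- (Rmult_1_l (c^2*(x*M))) at 1.
      apply Rmult_le_compat_r; nra. }
    nra.
  - assert (HLk2 : L <= ln k) by (unfold L; pose proof (ln_le_sub1 (ln k)); lra).
    assert (Hk0 : 0 <= k) by lra.
    assert (Hsk : 0 <= sqrt k) by apply sqrt_pos.
    pose proof (sqrt_sqrt _ Hsk) as Hq. set (q := sqrt (sqrt k)) in *.
    pose proof (sqrt_sqrt _ Hk0) as Hk'.
    assert (Hq0 : 0 < q).
    { unfold q. apply sqrt_lt_R0. apply sqrt_lt_R0. lra. }
    assert (Hq4 : k = q^4) by (rewrite <- Hk', <- Hq; ring).
    assert (Hlnk : ln k = 4 * ln q).
    { rewrite Hq4, ln_pow by lra. simpl. lra. }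
    pose proof (ln_le_q q Hq0).
    assert (HL3 : L <= 2 * q) by lra.
    assert (k*L <= k*(2*q)) by (apply Rmult_le_compat_l; lra).
    assert (Hd3 : d*d <= 2*c^2*q^5).
    { assert (HH : c^2*(k*L) <= c^2*(k*(2*q))) by (apply Rmult_le_compat_l; nra).
      assert (HH2 : c^2*(k*(2*q)) = 2*c^2*q^5) by (rewrite Hq4; ring). lra. }
    assert (Hdk : q^4 < 2*d) by (rewrite <- Hq4; unfold d in *; lra).
    assert (Hq3 : q^3 < 8*c^2).
    { assert (q^4*q^4 < 4*(d*d)) by nra.
      assert (q^5 * q^3 < q^5 * (8*c^2)) by nra.
      assert (0 < q^5) by (apply pow_lt; lra).
      nra. }
    assert (Hs17 : 17/10*c <= s) by nra.
    assert (Hq4b : 51/10*c^3 < q^4) by (rewrite <- Hq4; unfold d in *; nra).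
    assert (Hc0 : 0 < c) by lra.
    assert (A1 : (51/10*c^3)^3 <= (q^4)^3) by (apply pow_incr; split; [nra|lra]).
    assert (A2 : (q^3)^4 <= (8*c^2)^4) by (apply pow_incr; split; [nra|lra]).
    assert (E : (q^4)^3 = (q^3)^4) by ring.
    assert (c^8 * (132*c) <= c^8 * 4096) by nra.
    assert (0 < c^8) by (apply pow_lt; lra).
    nra.
Qed.

Lemma lam_max_ge lam J j : (j < J)%nat -> lam j <= lam_max lam J.
Proof.
  induction J; intros H; [lia|]. simpl.
  destruct (Nat.eq_dec j J) as [->|Hn].
  - apply Rmax_r.
  - eapply Rle_trans; [apply IHJ; lia | apply Rmax_l].
Qed.

Theorem mainTheorem7
  (J : nat) (lam : nat -> R) (Gamma : R) (U : nat -> nat -> R)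
  (hJ : (1 <= J)%nat)
  (hlam : forall j, (j < J)%nat -> 0 < lam j)
  (hGamma : 0 <= Gamma)
  (hmin : forall j, (j < J)%nat -> exp (2 * exp 1) <= lam j * Gamma)
  (hU : forall j i, (j < J)%nat -> (1 <= i)%nat -> 0 <= U j i)
  (hsum : forall j k, (j < J)%nat -> (1 <= k)%nat ->
            Rabs (psum (U j) k - / lam j * INR k) <= Gamma * phi (INR k))
  (t : R)
  (ht : forall j, (j < J)%nat ->
          / lam j * exp (exp 1) <= t /\
          / lam j + 3 * / lam j * (lam_max lam J) ^ 2 * Gamma ^ 2 <= t) :
  forall j, (j < J)%nat ->
    A_le (U j) t (t * lam j + 3 * lam j ^ 2 * Gamma ^ 2 * phi (t * lam j)).
Proof.
  intros j Hj k Hk.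
  pose proof (hlam j Hj) as Hl. pose proof (hmin j Hj) as Hm.
  pose proof (ht j Hj) as [Ht1 Ht2].
  pose proof exp_2e as H35.
  pose proof (lam_max_ge lam J j Hj) as Hmax.
  set (lm := lam_max lam J) in *. set (l := lam j) in *.
  set (x := t * l). set (c := l * Gamma).
  assert (Hx : exp (exp 1) <= x).
  { unfold x. replace (exp (exp 1)) with (l * (/ l * exp (exp 1))) by (field; lra).
    replace (t*l) with (l*t) by ring. apply Rmult_le_compat_l; lra. }
  assert (Hx2 : 1 + 3 * lm^2 * Gamma^2 <= x).
  { unfold x. replace (1 + 3 * lm^2 * Gamma^2) with (l * (/ l + 3 * / l * lm ^ 2 * Gamma ^ 2)) by (field; lra).
    replace (t*l) with (l*t) by ring. apply Rmult_le_compat_l; lra. }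
  assert (Hlm : l^2 <= lm^2) by (apply pow_incr; lra).
  assert (Hxc : 3 * c^2 <= x).
  { unfold c. assert (l^2*Gamma^2 <= lm^2*Gamma^2) by (apply Rmult_le_compat_r; [apply pow2_ge_0|lra]). 
    replace ((l*Gamma)^2) with (l^2*Gamma^2) by ring. lra. }
  replace (3 * l^2 * Gamma^2) with (3 * c^2) by (unfold c; ring).
  fold x.
  apply core; [exact Hx | exact Hxc | unfold c; lra | apply pos_INR |].
  destruct k as [|k].
  - simpl. pose proof (phi_pos 0). assert (0 <= c) by (unfold c; nra).
    assert (0 < exp (exp 1)) by apply exp_pos. nra.
  - pose proof (hsum j (S k) Hj ltac:(lia)) as Hs. fold l in Hs.
    pose proof (Rle_abs (-(psum (U j) (S k) - / l * INR (S k)))) as Ha.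
    rewrite Rabs_Ropp in Ha.
    assert (/ l * INR (S k) <= t + Gamma * phi (INR (S k))) by lra.
    assert (Hm2 : l * (/ l * INR (S k)) <= l * (t + Gamma * phi (INR (S k))))
      by (apply Rmult_le_compat_l; lra).
    replace (l * (/ l * INR (S k))) with (INR (S k)) in Hm2 by (field; lra).
    unfold x, c. lra.
Qed.
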